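(* Write \[ \frac{2q J_{20}^{15} J_{2,20} J_{10,20}}{J_{1,20}^3 J_{3,20}^2 J_{4,20}^2 J_{5,20}^2 J_{6,20} J_{7,20}^2 J_{9,20}^3} = \sum_{n\ge 1} b''(n) q^n . \] Then $b''(n) \ge 2n$ for all $n \ge 1$.
   Context: Notation: $(a;q)_\infty = \prod_{i\ge 0}(1-aq^i)$ and $(a_1,\dots,a_k;q)_\infty = (a_1;q)_\infty\cdots(a_k;q)_\infty$. For positive integers $a<b$: $J_b = (q^b;q^b)_\infty$ and $J_{a,b} = (q^a, q^{b-a}, q^b; q^b)_\infty$. *)

(* Defs.v *)
(* Formal power series in q with integer coefficients are
   handled through truncation: the coefficient of q^n of an infinite product
   of factors (1 - q^k) (k >= 1) and of their inverses 1/(1 - q^k) is the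
   coefficient of q^n of the polynomial obtained by keeping the factors with
   index i <= n and expanding each 1/(1-q^k) as sum_{j<=n} q^{kj}; all these
   agree with the true series modulo q^(n+1). *)
From HB Require Import structures.
From mathcomp Require Import all_boot all_order all_algebra.
Set Implicit Arguments. Unset Strict Implicit. Unset Printing Implicit Defensive.
Import Order.TTheory GRing.Theory Num.Theory.
Local Open Scope ring_scope.

(* (q^a; q^m)_oo truncated with N+1 factors (exact modulo q^(N+1) when a,m >= 1) *)
Definition poch_tr (a m N : nat) : {poly int} :=
  \prod_(i < N.+1) (1 - 'X^(a + m * i)).

(* 1/(q^a; q^m)_oo truncated (exact modulo q^(N+1) when a,m >= 1) *)
Definition ipoch_tr (a m N : nat) : {poly int} :=
  \prod_(i < N.+1) \sum_(j < N.+1) 'X^((a + m * i) * j).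

(* J_b = (q^b;q^b)_oo and J_{a,b} = (q^a, q^{b-a}, q^b; q^b)_oo, truncated *)
Definition J_tr (b N : nat) : {poly int} := poch_tr b b N.
Definition Jab_tr (a b N : nat) : {poly int} :=
  poch_tr a b N * poch_tr (b - a) b N * poch_tr b b N.
Definition iJab_tr (a b N : nat) : {poly int} :=
  ipoch_tr a b N * ipoch_tr (b - a) b N * ipoch_tr b b N.

Definition F_tr (N : nat) : {poly int} :=
  2%:R *: 'X * J_tr 20 N ^+ 15 * Jab_tr 2 20 N * Jab_tr 10 20 N
  * iJab_tr 1 20 N ^+ 3 * iJab_tr 3 20 N ^+ 2 * iJab_tr 4 20 N ^+ 2
  * iJab_tr 5 20 N ^+ 2 * iJab_tr 6 20 N * iJab_tr 7 20 N ^+ 2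
  * iJab_tr 9 20 N ^+ 3.

Definition bpp (n : nat) : int := (F_tr n)`_n.

(* Main.v *)
Require Import Defs.
From HB Require Import structures.
From mathcomp Require Import all_boot all_order all_algebra.
From mathcomp Require Import zify ring.
Import Order.TTheory GRing.Theory Num.Theory.
Set Implicit Arguments. Unset Strict Implicit. Unset Printing Implicit Defensive.
Local Open Scope ring_scope.

Definition pp (e : nat) : {poly int} := 1 - 'X^e.
Definition gg (N e : nat) : {poly int} := \sum_(j < N.+1) 'X^(e * j).
Arguments pp e%_N.
Arguments gg N%_N e%_N.
Definition nn (N : nat) (p : {poly int}) := forall k, (k <= N)%N -> 0 <= p`_k.
Definition G N p := nn N (p - 1).
Definition eqm N (p q : {poly int}) := exists r, p = q + 'X^(N.+1) * r.

Lemma eqm_refl N p : eqm N p p.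
Proof. by exists 0; rewrite mulr0 addr0. Qed.

Lemma eqm_sym N p q : eqm N p q -> eqm N q p.
Proof. by move=> [r ->]; exists (- r); rewrite mulrN addrK. Qed.

Lemma eqm_trans N p q s : eqm N p q -> eqm N q s -> eqm N p s.
Proof. move=> [r ->] [t ->]; exists (t + r); ring. Qed.

Lemma eqm_mul N p p' q q' : eqm N p p' -> eqm N q q' -> eqm N (p * q) (p' * q').
Proof. move=> [r ->] [s ->]; exists (r * q' + p' * s + 'X^(N.+1) * r * s); ring. Qed.

Lemma eqm_add N p p' q q' : eqm N p p' -> eqm N q q' -> eqm N (p + q) (p' + q').
Proof. move=> [r ->] [s ->]; exists (r + s); ring. Qed.

Lemma eqm_exp N p p' k : eqm N p p' -> eqm N (p ^+ k) (p' ^+ k).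
Proof.
move=> h; elim: k => [|k IH]; first by rewrite !expr0; apply: eqm_refl.
by rewrite !exprS; apply: eqm_mul.
Qed.

Lemma eqm_coef N p q k : eqm N p q -> (k <= N)%N -> p`_k = q`_k.
Proof. by move=> [r ->] hk; rewrite coefD coefXnM ltnS hk addr0. Qed.

Lemma nn_add N p q : nn N p -> nn N q -> nn N (p + q).
Proof. by move=> hp hq k hk; rewrite coefD addr_ge0 ?hp ?hq. Qed.

Lemma nn_mul N p q : nn N p -> nn N q -> nn N (p * q).
Proof.
move=> hp hq k hk; rewrite coefM; apply: sumr_ge0 => -[j hj] _ /=.
by apply: mulr_ge0; [apply: hp | apply: hq]; lia.
Qed.

Lemma nn0 N : nn N 0.
Proof. by move=> k _; rewrite coef0. Qed.

Lemma nn1 N : nn N 1.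
Proof. by move=> k _; rewrite coef1; case: (k == 0%N). Qed.

Lemma nnXn N e : nn N 'X^e.
Proof. by move=> k _; rewrite coefXn; case: (k == e). Qed.

Lemma nn_sum N M (F : 'I_M -> {poly int}) : (forall i, nn N (F i)) -> nn N (\sum_(i < M) F i).
Proof. move=> h; apply: (big_ind (nn N)) => //; [exact: nn0 | exact: nn_add]. Qed.

Lemma G1 N : G N 1.
Proof. by rewrite /G subrr; apply: nn0. Qed.

Lemma G_nn N p : G N p -> nn N p.
Proof. by move=> h; rewrite -(subrK 1 p); apply: nn_add => //; apply: nn1. Qed.

Lemma G_mul N p q : G N p -> G N q -> G N (p * q).
Proof.
move=> hp hq; rewrite /G.
have -> : p * q - 1 = (p - 1) * (q - 1) + (p - 1) + (q - 1) by ring.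
by apply: nn_add => //; apply: nn_add => //; apply: nn_mul.
Qed.

Lemma G_exp N p k : G N p -> G N (p ^+ k).
Proof.
move=> h; elim: k => [|k IH]; first by rewrite expr0; apply: G1.
by rewrite exprS; apply: G_mul.
Qed.

Lemma G_prod N M (F : 'I_M -> {poly int}) : (forall i, G N (F i)) -> G N (\prod_(i < M) F i).
Proof. move=> h; apply: (big_ind (G N)) => //; [exact: G1 | exact: G_mul]. Qed.

Lemma G_eqm N p q : eqm N p q -> G N q -> G N p.
Proof.
move=> [r ->] hq k hk; rewrite addrAC coefD coefXnM ltnS hk addr0; exact: hq.
Qed.

Lemma G_gg N e : G N (gg N e).
Proof.
rewrite /G /gg big_ord_recl muln0 expr0 addrAC subrr add0r.
by apply: nn_sum => i; apply: nnXn.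
Qed.

Lemma tele B M : (1 - 'X^B) * \sum_(j < M) 'X^(B * j) = 1 - 'X^(B * M) :> {poly int}.
Proof.
elim: M => [|M IH]; first by rewrite big_ord0 muln0 expr0 mulr0 subrr.
rewrite big_ord_recr /= mulrDr IH mulnS exprD; ring.
Qed.

Lemma XN_big N e : (N.+1 <= e)%N -> 'X^e = 'X^(N.+1) * 'X^(e - N.+1) :> {poly int}.
Proof. by move=> h; rewrite -exprD subnKC. Qed.

Lemma pg1 N B : (0 < B)%N -> eqm N (pp B * gg N B) 1.
Proof.
move=> hB; rewrite /pp /gg tele.
have h : (N.+1 <= B * N.+1)%N by rewrite leq_pmull.
exists (- 'X^(B * N.+1 - N.+1)); rewrite (@XN_big _ _ h); ring.
Qed.

Lemma p_big N e : (N < e)%N -> eqm N (pp e) 1.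
Proof. move=> h; exists (- 'X^(e - N.+1)); rewrite /pp (@XN_big _ _ h); ring. Qed.

Lemma gg_big N e : (N < e)%N -> eqm N (gg N e) 1.
Proof.
move=> h; rewrite /gg big_ord_recl muln0 expr0.
exists (\sum_(j < N) 'X^(e * (lift ord0 j) - N.+1)); congr (_ + _).
rewrite big_distrr; apply: eq_bigr => j _ /=; rewrite -exprD subnKC // /bump /=; nia.
Qed.

Lemma eqm_ext N (f : nat -> {poly int}) M M' : (M <= M')%N ->
  (forall i, (M <= i)%N -> eqm N (f i) 1) ->
  eqm N (\prod_(i < M) f i) (\prod_(i < M') f i).
Proof.
elim: M' => [|M' IH] hle hf.
  by move: hle; rewrite leqn0 => /eqP ->; apply: eqm_refl.
case: (ltngtP M M'.+1) hle => // [hlt _|-> _]; last by apply: eqm_refl.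
rewrite big_ord_recr /= -(mulr1 (\prod_(i < M) f i)).
by apply: eqm_mul; [apply: IH | apply: eqm_sym; apply: hf].
Qed.

Lemma prod_split (f : nat -> {poly int}) K :
  \prod_(i < K + K) f i = \prod_(m < K) (f (m + m)%N * f (m + m).+1).
Proof.
elim: K => [|K IH]; first by rewrite !big_ord0.
by rewrite addnS addSn !big_ord_recr /= IH mulrA.
Qed.

Lemma eqm_prod1 N M (F : 'I_M -> {poly int}) : (forall i, eqm N (F i) 1) ->
  eqm N (\prod_(i < M) F i) 1.
Proof.
move=> h; apply: (big_ind (fun x => eqm N x 1)); first exact: eqm_refl.
  by move=> x y hx hy; rewrite -(mulr1 1); apply: eqm_mul.
by move=> i _; apply: h.
Qed.

Lemma unit_div N A B : A = (B + B)%N -> (0 < B)%N -> G N (pp A * gg N B).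
Proof.
move=> -> hB.
have -> : pp (B + B) * gg N B = (1 + 'X^B) * (pp B * gg N B) by rewrite /pp exprD; ring.
apply: (@G_eqm _ _ ((1 + 'X^B) * 1)); first by apply: eqm_mul; [apply: eqm_refl | apply: pg1].
by rewrite mulr1 /G addrAC subrr add0r; apply: nnXn.
Qed.

Lemma unit_sum N A B C : A = (B + C)%N -> (0 < B)%N -> (0 < C)%N ->
  G N (pp A * gg N B * gg N C).
Proof.
move=> -> hB hC.
have -> : pp (B + C) * gg N B * gg N C =
  gg N C * (pp B * gg N B) + 'X^B * gg N B * (pp C * gg N C) by rewrite /pp exprD; ring.
apply: (@G_eqm _ _ (gg N C * 1 + 'X^B * gg N B * 1)).
  by apply: eqm_add; apply: eqm_mul; try apply: eqm_refl; apply: pg1.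
rewrite !mulr1 /G addrAC; apply: nn_add; first exact: G_gg.
by apply: nn_mul; [apply: nnXn | apply: G_nn; apply: G_gg].
Qed.

Definition Ev N a := \prod_(m < N.+1) pp (a + 20 * (m + m)).
Definition Od N a := \prod_(m < N.+1) pp (a + 20 * (m + m).+1).
Definition S33 N := \prod_(m < N.+1) gg N (13 + 20 * m.+1).
Definition R1 N := \prod_(i < N) gg N (1 + 20 * i.+1).

Lemma P_split N a : eqm N (poch_tr a 20 N) (Ev N a * Od N a).
Proof.
have -> : poch_tr a 20 N = \prod_(i < N.+1) pp (a + 20 * i) by [].
have h := @eqm_ext N (fun i => pp (a + 20 * i)) N.+1 (N.+1 + N.+1)%N (leq_addr _ _).
have h' := h (fun i hi => @p_big N (a + 20 * i)%N ltac:(lia)).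
apply: (eqm_trans h').
by rewrite (prod_split (fun i => pp (a + 20 * i))) big_split; apply: eqm_refl.
Qed.

Lemma I13_eq N : eqm N (ipoch_tr 13 20 N) (gg N 13 * S33 N).
Proof.
have -> : ipoch_tr 13 20 N = \prod_(i < N.+1) gg N (13 + 20 * i) by [].
apply: (eqm_trans (@eqm_ext N (fun i => gg N (13 + 20 * i)) N.+1 N.+2 _ _)).
- by [].
- by move=> i hi; apply: gg_big; lia.
rewrite big_ord_recl muln0 addn0 /S33.
apply: eqm_mul; first exact: eqm_refl.
rewrite (eq_bigr (fun m : 'I_N.+1 => gg N (13 + 20 * m.+1))); first exact: eqm_refl.
by move=> i _; rewrite lift0.
Qed.

Lemma I1_eq N : ipoch_tr 1 20 N = gg N 1 * R1 N.
Proof.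
have -> : ipoch_tr 1 20 N = \prod_(i < N.+1) gg N (1 + 20 * i) by [].
rewrite big_ord_recl muln0 addn0 /R1; by congr (_ * _).
Qed.

Lemma JJ N : eqm N (J_tr 20 N * ipoch_tr 20 20 N) 1.
Proof.
rewrite /J_tr /poch_tr /ipoch_tr -big_split; apply: eqm_prod1 => i /=.
by apply: pg1.
Qed.

Lemma G_I N a : G N (ipoch_tr a 20 N).
Proof. by apply: G_prod => i; apply: G_gg. Qed.

Lemma gg1_coef N j : (j <= N)%N -> (gg N 1)`_j = 1.
Proof.
move=> hj; rewrite /gg coef_sum (bigD1 (Ordinal (hj : (j < N.+1)%N))) //= mul1n coefXn eqxx.
rewrite big1 ?addr0 // => i hi; rewrite coefXn mul1n; case: eqP => // e.
by move: hi; rewrite -val_eqE /= e eqxx.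
Qed.

Lemma gg1sq N k : (k <= N)%N -> (gg N 1 ^+ 2)`_k = k.+1%:R.
Proof.
move=> hk; rewrite expr2 coefM.
transitivity (\sum_(j < k.+1) (1:int)); last by rewrite sumr_const card_ord.
apply: eq_bigr => -[j hj] _ /=; rewrite !gg1_coef ?mulr1 //; lia.
Qed.

Lemma main_eqm N : exists W, G N W /\
  eqm N (F_tr N) (2%:R *: 'X * (gg N 1 ^+ 2 * W)).
Proof.
pose I a := ipoch_tr a 20 N.
pose J := poch_tr 20 20 N.
pose Rest := J ^+ 2 * poch_tr 2 20 N * poch_tr 18 20 N * poch_tr 10 20 N ^+ 2
  * I 1 ^+ 3 * I 19 ^+ 3 * I 3 ^+ 2 * I 17 ^+ 2 * I 4 ^+ 2 * I 16 ^+ 2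
  * I 5 ^+ 2 * I 15 ^+ 2 * I 6 * I 14 * I 7 ^+ 2 * I 13 ^+ 2 * I 9 ^+ 3 * I 11 ^+ 3.
have eF : F_tr N = 2%:R *: 'X * (J_tr 20 N * ipoch_tr 20 20 N) ^+ 15 * Rest.
  by rewrite /F_tr /Jab_tr /iJab_tr /Rest /I /J /J_tr; ring.
pose W := (Ev N 2 * I 1) * (Ev N 18 * I 9) * (Ev N 10 * I 5) ^+ 2
  * (Ev N 20 * I 4 * I 16) * (Ev N 20 * I 3 * I 17) * (Od N 2 * I 11)
  * (Od N 18 * I 19) * (Od N 10 * I 15) ^+ 2 * (Od N 20 * I 7 * S33 N) ^+ 2
  * (R1 N ^+ 2 * I 19 ^+ 2 * I 3 * I 17 * I 4 * I 16 * I 6 * I 14 * I 9 ^+ 2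
     * I 11 ^+ 2 * gg N 13 ^+ 2).
exists W; split.
  have u1 : G N (Ev N 2 * I 1).
    by rewrite /Ev /I /ipoch_tr -big_split; apply: G_prod => i; apply: unit_div => //; lia.
  have u2 : G N (Ev N 18 * I 9).
    by rewrite /Ev /I /ipoch_tr -big_split; apply: G_prod => i; apply: unit_div => //; lia.
  have u3 : G N (Ev N 10 * I 5).
    by rewrite /Ev /I /ipoch_tr -big_split; apply: G_prod => i; apply: unit_div => //; lia.
  have u4 : G N (Ev N 20 * I 4 * I 16).
    by rewrite /Ev /I /ipoch_tr -!big_split; apply: G_prod => i; apply: unit_sum => //; lia.
  have u5 : G N (Ev N 20 * I 3 * I 17).
    by rewrite /Ev /I /ipoch_tr -!big_split; apply: G_prod => i; apply: unit_sum => //; lia.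
  have u6 : G N (Od N 2 * I 11).
    by rewrite /Od /I /ipoch_tr -big_split; apply: G_prod => i; apply: unit_div => //; lia.
  have u7 : G N (Od N 18 * I 19).
    by rewrite /Od /I /ipoch_tr -big_split; apply: G_prod => i; apply: unit_div => //; lia.
  have u8 : G N (Od N 10 * I 15).
    by rewrite /Od /I /ipoch_tr -big_split; apply: G_prod => i; apply: unit_div => //; lia.
  have u9 : G N (Od N 20 * I 7 * S33 N).
    by rewrite /Od /S33 /I /ipoch_tr -!big_split; apply: G_prod => i; apply: unit_sum => //; lia.
  have hI : forall a, G N (I a) by move=> a; apply: G_I.
  have hR : G N (R1 N) by apply: G_prod => i; apply: G_gg.
  have h13 : G N (gg N 13) by apply: G_gg.
  rewrite /W.
  by repeat first [ assumption | apply: G_mul | apply: G_exp ].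
rewrite eF.
have -> : gg N 1 ^+ 2 * W = 1 ^+ 15 * (gg N 1 ^+ 2 * W) by rewrite expr1n mul1r.
rewrite -mulrA; apply: eqm_mul; first exact: eqm_refl.
apply: eqm_mul; first by apply: eqm_exp; apply: JJ.
apply: (@eqm_trans _ _ ((Ev N 20 * Od N 20) ^+ 2 * (Ev N 2 * Od N 2) * (Ev N 18 * Od N 18)
  * (Ev N 10 * Od N 10) ^+ 2
  * I 1 ^+ 3 * I 19 ^+ 3 * I 3 ^+ 2 * I 17 ^+ 2 * I 4 ^+ 2 * I 16 ^+ 2
  * I 5 ^+ 2 * I 15 ^+ 2 * I 6 * I 14 * I 7 ^+ 2 * (gg N 13 * S33 N) ^+ 2 * I 9 ^+ 3 * I 11 ^+ 3)).
  rewrite /Rest.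
  by repeat first [ apply: eqm_exp | apply: eqm_mul | apply: P_split | apply: I13_eq | apply: eqm_refl ].
rewrite /W /I I1_eq.
have eqE : forall p q : {poly int}, p = q -> eqm N p q by move=> p q ->; apply: eqm_refl.
apply: eqE; ring.
Qed.

Theorem mainTheorem7 : forall n : nat, (1 <= n)%N -> (2 * n)%:Z <= bpp n.
Proof.
move=> N hN; rewrite /bpp.
have [W [hW hF]] := main_eqm N.
rewrite (eqm_coef hF (leqnn N)) -scalerAl coefZ coefXM.
have -> : (N == 0%N) = false by apply/negbTE; rewrite -lt0n.
have hk : (N.-1 <= N)%N by apply: leq_pred.
have -> : gg N 1 ^+ 2 * W = gg N 1 ^+ 2 + gg N 1 ^+ 2 * (W - 1) by ring.
have hnn : 0 <= (gg N 1 ^+ 2 * (W - 1))`_N.-1.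
  apply: (@nn_mul N) => //.
  by apply: G_nn; apply: G_exp; apply: G_gg.
rewrite coefD gg1sq // prednK // natz.
set y := (_ * (W - 1))`_N.-1 in hnn *.
lia.
Qed.
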